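(* Let $P$ be a finite poset, $\epsilon\in\{1,-1\}$ and $\xi\in S^{(\epsilon)}$ such that $T^\xi$ is a generator of $\omega^{(\epsilon)}$ of degree $d>q^{(\epsilon)}\mathrm{dist}(-\infty,\infty)$. Define $\xi_1\in\mathbb Z^{P^-}$ by $\xi_1(z)=\xi(z)-1$ if $z=-\infty$ or if there exists $C\in C_\xi^{[d-\epsilon]}$ with $z=\max\{c\in C:\xi(c)>\epsilon\}$, and $\xi_1(z)=\xi(z)$ otherwise. Then $\xi_1\in S^{(\epsilon)}$ and $T^{\xi_1}$ is a generator of $\omega^{(\epsilon)}$ of degree $d-1$.
   Context: $P^\pm=P\cup\{-\infty,\infty\}$, $-\infty<z<\infty$ for $z\in P$; $P^-=P\cup\{-\infty\}$. Saturated chain: $x=z_0\lessdot\cdots\lessdot z_t=y$, length $t$; $q^{(\epsilon)}\mathrm{dist}(x,y)=\max\{\epsilon t:$ saturated chain of length $t$ from $x$ to $y$ in $P^\pm\}$. $\xi^+(B)=\sum_{b\in B}\xi(b)$. $S^{(m)}=\{\xi\in\mathbb Z^{P^-}:\xi(x)\ge m\ \forall x\in P,\ \xi(-\infty)\ge\xi^+(C)+m$ for every maximal chain $C$\}; $C_\xi^{[m]}$ = maximal chains $C$ of $P$ with $\xi^+(C)=m$. $R=\mathbb K[\mathcal C(P)]=\bigoplus_{S^{(0)}}\mathbb KT^\xi$ (Ehrhart ring of the chain polytope; $T^\xi=\prod_{x\in P^-}T_x^{\xi(x)}$, $\deg T^\xi=\xi(-\infty)$), $\omega^{(1)}=\omega=\bigoplus_{S^{(1)}}\mathbb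 KT^\xi$ canonical ideal, $\omega^{(-1)}=R:\omega=\bigoplus_{S^{(-1)}}\mathbb KT^\xi$. A generator of $\omega^{(\epsilon)}$ is a monomial $T^\xi$, $\xi\in S^{(\epsilon)}$, not of the form $T^{\xi_1}T^{\xi_2}$ with $\xi_1\in S^{(0)}$, $\xi_1(-\infty)>0$, $\xi_2\in S^{(\epsilon)}$. *)

(* Defs.v *)
From HB Require Import structures.
From mathcomp Require Import all_boot all_order all_algebra.
Set Implicit Arguments. Unset Strict Implicit. Unset Printing Implicit Defensive.
Import Order.TTheory GRing.Theory Num.Theory.

Section Chains.
Context {disp : Order.disp_t} {T : finPOrderType disp}.

Inductive ext := MInf | Elt of T | PInf.

Definition ext_lt (x y : ext) : bool :=
  match x, y with
  | MInf, MInf => false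
  | MInf, _ => true
  | Elt a, Elt b => (a < b)%O
  | Elt _, PInf => true
  | _, _ => false
  end.

(* covering relation x <. y in P^{+-}; any element strictly between two
   elements of P^{+-} necessarily lies in P *)
Definition ext_cov (x y : ext) : bool :=
  ext_lt x y && ~~ [exists z : T, ext_lt x (Elt z) && ext_lt (Elt z) y].

(* x = z_0 <. z_1 <. ... <. z_t = y with s = [:: z_1; ...; z_t], length t = size s *)
Definition sat_chain (x y : ext) (s : seq ext) : Prop :=
  path ext_cov x s /\ last x s = y /\ (0 < size s)%N.

Definition chainb (C : {set T}) : bool :=
  [forall x in C, forall y in C, (x <= y)%O || (y <= x)%O].

Definition maxchainb (C : {set T}) : bool :=
  chainb C && [forall D : {set T}, (chainb D && (C \subset D)) ==> (D == C)].

Local Open Scope ring_scope.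

(* xi in Z^{P^-}: xi None is the value at -oo *)
Definition xiplus (xi : option T -> int) (C : {set T}) : int :=
  \sum_(c in C) xi (Some c).

Definition inS (m : int) (xi : option T -> int) : Prop :=
  (forall x : T, m <= xi (Some x)) /\
  (forall C : {set T}, maxchainb C -> xiplus xi C + m <= xi None).

Definition degree (xi : option T -> int) : int := xi None.

Definition is_generator (eps : int) (xi : option T -> int) : Prop :=
  inS eps xi /\
  ~ (exists xi1 xi2 : option T -> int,
        [/\ inS 0 xi1, 0 < xi1 None, inS eps xi2 &
            forall z, xi z = xi1 z + xi2 z]).

Definition Cxi (xi : option T -> int) (m : int) (C : {set T}) : bool :=
  maxchainb C && (xiplus xi C == m).

Definition is_max_big (eps : int) (xi : option T -> int) (C : {set T}) (z : T) : bool :=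
  [&& z \in C, eps < xi (Some z) &
      [forall c in C, (eps < xi (Some c)) ==> (c <= z)%O]].

Definition xi_one (eps : int) (xi : option T -> int) (z : option T) : int :=
  match z with
  | None => xi None - 1
  | Some x =>
      if [exists C : {set T}, Cxi xi (degree xi - eps) C && is_max_big eps xi C x]
      then xi (Some x) - 1 else xi (Some x)
  end.

End Chains.
Arguments ext : clear implicits.
Arguments ext {disp} T.

(* Main.v *)
Require Import Defs.
From HB Require Import structures.
From mathcomp Require Import all_boot all_order all_algebra zify.
Import Order.TTheory GRing.Theory Num.Theory.
Set Implicit Arguments. Unset Strict Implicit.

Section H.
Context {disp : Order.disp_t} {T : finPOrderType disp}.
Implicit Types (C D : {set T}) (x y z : T).

Definition rk x := #|[set y : T | (y < x)%O]|.

Lemma rk_lt x y : (x < y)%O -> (rk x < rk y)%N.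
Proof.
move=> lxy; apply: proper_card; apply/properP; split.
  apply/subsetP => u; rewrite !inE => /lt_trans; exact.
by exists x; rewrite !inE ?ltxx.
Qed.

Lemma chainP C x y : chainb C -> x \in C -> y \in C -> (x <= y)%O || (y <= x)%O.
Proof. by move=> /forallP /(_ x) /implyP H /H /forallP /(_ y) /implyP H' /H'. Qed.

Lemma chainI C : (forall x y, x \in C -> y \in C -> (x <= y)%O || (y <= x)%O) -> chainb C.
Proof.
move=> H; apply/forallP => x; apply/implyP => xC; apply/forallP => y; apply/implyP => yC.
exact: H.
Qed.

Lemma maxchain_chain C : maxchainb C -> chainb C.
Proof. by case/andP. Qed.

Lemma maxchain_in C x : maxchainb C ->
  (forall c, c \in C -> (x <= c)%O || (c <= x)%O) -> x \in C.
Proof.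
case/andP => ch /forallP /(_ (x |: C)) /implyP H cmp.
have: (x |: C) == C.
  apply: H; apply/andP; split; last exact: subsetUr.
  apply: chainI => u v; rewrite !inE => /orP[/eqP->|uC] /orP[/eqP->|vC].
  - by rewrite lexx.
  - exact: cmp.
  - by rewrite orbC cmp.
  - exact: chainP ch uC vC.
by move/eqP => <-; rewrite setU11.
Qed.

Lemma maxchainI C : chainb C ->
  (forall x, (forall c, c \in C -> (x <= c)%O || (c <= x)%O) -> x \in C) -> maxchainb C.
Proof.
move=> ch H; apply/andP; split => //; apply/forallP => D; apply/implyP => /andP[chD sCD].
rewrite eqEsubset; apply/andP; split => //; apply/subsetP => x xD.
apply: H => c cC; apply: chainP chD xD _; exact: (subsetP sCD).
Qed.

Lemma exists_maxchain C : chainb C -> exists2 D, maxchainb D & C \subset D.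
Proof.
move=> ch; have [D /maxsetP [chD mD] sCD] := maxset_exists (P := chainb) ch.
exists D => //; apply/andP; split => //; apply/forallP => E; apply/implyP => /andP[chE sDE].
by rewrite (mD E chE sDE).
Qed.

Local Open Scope ring_scope.

Lemma sum_sub C D (f : T -> int) : C \subset D -> (forall x, 0 <= f x) ->
  \sum_(x in C) f x <= \sum_(x in D) f x.
Proof.
move=> sCD f0; rewrite [X in X <= _]big_mkcond [X in _ <= X]big_mkcond /=.
apply: ler_sum => x _; case: ifP => xC; first by rewrite (subsetP sCD).
by case: ifP.
Qed.

End H.

Section H2.
Context {disp : Order.disp_t} {T : finPOrderType disp}.
Implicit Types (C D : {set T}) (x y z : T).

Lemma ext_lt_trans : transitive (@ext_lt disp T).
Proof.
move=> [|b|] [|a|] [|c|] //=; exact: lt_trans.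
Qed.

Lemma ext_lt_irr (u : ext T) : ext_lt u u = false.
Proof. by case: u => //= a; rewrite ltxx. Qed.

Lemma sorted_idx (L : seq (ext T)) a b : sorted ext_lt L ->
  (a < size L)%N -> (b < size L)%N ->
  ext_lt (nth MInf L a) (nth MInf L b) -> (a < b)%N.
Proof.
move=> sL aL bL; case: (ltngtP a b) => // [ba|->]; last by rewrite ext_lt_irr.
move=> h; have := sorted_ltn_nth ext_lt_trans MInf sL _ _ bL aL ba.
by move=> h2; have := ext_lt_trans h h2; rewrite ext_lt_irr.
Qed.

Lemma maxchain_sat C : maxchainb C ->
  exists s : seq (ext T), sat_chain MInf PInf s /\ size s = (#|C|).+1.
Proof.
move=> mC; have chC := maxchain_chain mC.
set s0 := sort <=%O (enum C).
have s0le : sorted <=%O s0.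
  apply: (sort_sorted_in (P := mem C)); last by apply/allP => x; rewrite mem_enum.
  move=> x y xC yC; exact: chainP chC xC yC.
have s0lt : sorted <%O s0 by rewrite lt_sorted_uniq_le s0le sort_uniq enum_uniq.
have memC c : c \in C -> exists2 j, (j < size s0)%N & nth c s0 j = c.
  move=> cC; have cs : c \in s0 by rewrite mem_sort mem_enum.
  by exists (index c s0); [rewrite index_mem | rewrite nth_index].
set L := map Elt s0 ++ [:: PInf].
have mems c j : (j < size s0)%N -> nth MInf (MInf :: L) j.+1 = Elt (nth c s0 j).
  move=> js /=; rewrite /L nth_cat size_map js.
  by rewrite (nth_map c).
have sL : sorted ext_lt (MInf :: L).
  rewrite /= /L cat_path /=; apply/andP; split; last first.
    by case: (lastP s0) => [|r a] //=; rewrite map_rcons last_rcons.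
  case E: s0 => [|a r] //=; rewrite E in s0lt; rewrite path_map.
  by rewrite (eq_path (e' := <%O)).
have sizeL : size (MInf :: L) = (size s0).+2 by rewrite /= /L size_cat size_map addn1.
exists L; split; last by rewrite /L size_cat size_map size_sort -cardE addn1.
split; last first.
  by split; [rewrite /L cats1 last_rcons | rewrite /L size_cat addn1].
apply/(pathP MInf) => i iL.
have -> : nth MInf L i = nth MInf (MInf :: L) i.+1 by [].
have iL' : (i < size (MInf :: L))%N by rewrite /= ltnS ltnW.
have iL'' : (i.+1 < size (MInf :: L))%N by [].
apply/andP; split; first by apply: (sorted_ltn_nth ext_lt_trans MInf sL).
apply/negP => /existsP [z /andP [h1 h2]].
have zC : z \in C.
  apply: maxchain_in mC _ => c cC.
  have [j js <-] := memC c cC.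
  have jL : (j.+1 < size (MInf :: L))%N by rewrite sizeL ltnS ltnW.
  case: (ltnP i j.+1) => ij.
    move: ij; rewrite ltnS leq_eqVlt => /orP [/eqP ij|ij].
      by move: h2; rewrite ij (mems c j js) /= => /ltW ->.
    have := sorted_ltn_nth ext_lt_trans MInf sL _ _ iL'' jL ij.
    by move=> h3; have := ext_lt_trans h2 h3; rewrite (mems c j js) /= => /ltW ->.
  rewrite leq_eqVlt in ij; case/orP: ij => [/eqP ij|ij].
    by move: h1; rewrite -ij (mems c j js) /= => /ltW ->; rewrite orbT.
  have := sorted_ltn_nth ext_lt_trans MInf sL _ _ jL iL' ij.
  by move=> h3; have := ext_lt_trans h3 h1; rewrite (mems c j js) /= => /ltW ->; rewrite orbT.
have [j js jz] := memC z zC.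
have jL : (j.+1 < size (MInf :: L))%N by rewrite sizeL ltnS ltnW.
have e : Elt z = nth MInf (MInf :: L) j.+1 by rewrite (mems z j js) jz.
rewrite e in h1 h2.
have := sorted_idx sL iL' jL h1; have := sorted_idx sL jL iL'' h2.
by rewrite ltnS => /leq_ltn_trans H /H; rewrite ltnn.
Qed.
End H2.

Section H3.
Context {disp : Order.disp_t} {T : finPOrderType disp}.
Implicit Types (C D E : {set T}) (x y z : T).
Local Open Scope ring_scope.

Definition Aset (al : option T -> int) : {set T} :=
  [set x | (0 < al (Some x)) && [forall y, (y < x)%O ==> (al (Some y) <= 0)]].

Lemma L2 (al : option T -> int) E : inS 0 al -> 0 < al None -> maxchainb E ->
  (forall x, x \in E -> x \notin Aset al) -> xiplus al E < al None.
Proof.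
move=> [al0 alC] alN mE nA.
have := alC E mE; rewrite addr0 => leE.
rewrite lt_neqAle leE andbT; apply/negP => /eqP eqE.
have [c0 c0E c0p] : exists2 c, c \in E & 0 < al (Some c).
  case: (boolP [exists x in E, 0 < al (Some x)]) => [/exists_inP //|/exists_inPn H].
  move: alN; rewrite -eqE /xiplus big1 ?ltxx // => c cE.
  by apply/eqP; rewrite eq_le al0 andbT; move: (H c cE); rewrite -leNgt.
pose P c := (c \in E) && (0 < al (Some c)).
have Pc0 : P c0 by rewrite /P c0E c0p.
case: (arg_minnP rk Pc0) => c /andP [cE cp] cmin.
have : c \notin Aset al by exact: nA.
rewrite inE cp /= negb_forall => /existsP [y]; rewrite negb_imply -ltNge => /andP [yc yp].
pose F := y |: [set x in E | (c <= x)%O].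
have chF : chainb F.
  apply: chainI => u v; rewrite !inE => /orP[/eqP->|/andP[uE cu]] /orP[/eqP->|/andP[vE cv]].
  - by rewrite lexx.
  - by rewrite (ltW (lt_le_trans yc cv)).
  - by rewrite (ltW (lt_le_trans yc cu)) orbT.
  - exact: chainP (maxchain_chain mE) uE vE.
have [G mG sFG] := exists_maxchain chF.
have := (alC G mG); rewrite addr0 => HG.
have : al (Some y) + xiplus al E <= xiplus al G.
  apply: le_trans (sum_sub (f := fun x => al (Some x)) sFG al0).
  rewrite /F /xiplus big_setU1 /=; last first.
    by rewrite inE negb_and (lt_geF yc) orbT.
  rewrite lerD2l (bigID (fun x => (c <= x)%O)) /= [X in _ + X]big1 ?addr0.
    by rewrite le_eqVlt; apply/orP; left; apply/eqP; apply: eq_bigl => x; rewrite inE.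
  move=> x /andP [xE ncx]; apply/eqP; rewrite eq_le al0 andbT leNgt; apply/negP => xp.
  have xc : (x < c)%O.
    have := chainP (maxchain_chain mE) xE cE; rewrite (negbTE ncx) orbF lt_neqAle => ->.
    by rewrite andbT; apply: contraNneq ncx => ->.
  have := cmin x; rewrite /P xE xp => /(_ isT); rewrite leqNgt (rk_lt xc) //.
rewrite eqE => H; have := le_trans H HG; rewrite -lerBrDr subrr leNgt yp //.
Qed.

Definition ind (al : option T -> int) (z : option T) : int :=
  match z with None => 1 | Some x => if x \in Aset al then 1 else 0 end.

Lemma ind_chain al C : chainb C -> xiplus (ind al) C <= 1.
Proof.
move=> ch; rewrite /xiplus.
case: (boolP [exists a in C, a \in Aset al]) => [/exists_inP [a aC aA]|/exists_inPn H].
  rewrite (bigD1 a) //= aA big1 ?addr0 // => x /andP [xC xa].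
  case: ifP => // xA; exfalso.
  move: aA xA; rewrite !inE => /andP [ap /forallP Ha] /andP [xp /forallP Hx].
  have := chainP ch xC aC; case/orP => le.
    have : (x < a)%O by rewrite lt_neqAle xa.
    by move=> /(implyP (Ha x)); rewrite leNgt xp.
  have : (a < x)%O by rewrite lt_neqAle eq_sym xa.
  by move=> /(implyP (Hx a)); rewrite leNgt ap.
by rewrite big1 // => x xC /=; rewrite (negbTE (H x xC)).
Qed.

Definition glue C1 C2 z : {set T} :=
  [set x in C1 | (x <= z)%O] :|: [set x in C2 | ~~ (x <= z)%O].

Lemma glue_max C1 C2 z : maxchainb C1 -> maxchainb C2 -> z \in C1 -> z \in C2 ->
  maxchainb (glue C1 C2 z).
Proof.
move=> m1 m2 z1 z2; have c1 := maxchain_chain m1; have c2 := maxchain_chain m2.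
have ge1 x : x \in C1 -> ~~ (x <= z)%O -> (z <= x)%O.
  by move=> xC; have := chainP c1 xC z1; case/orP => [->|] // ->.
have ge2 x : x \in C2 -> ~~ (x <= z)%O -> (z <= x)%O.
  by move=> xC; have := chainP c2 xC z2; case/orP => [->|] // ->.
apply: maxchainI.
  apply: chainI => u v; rewrite !inE.
  move=> /orP[/andP[uC uz]|/andP[uC uz]] /orP[/andP[vC vz]|/andP[vC vz]].
  - exact: chainP c1 uC vC.
  - by rewrite (le_trans uz (ge2 v vC vz)).
  - by rewrite (le_trans vz (ge2 u uC uz)) orbT.
  - exact: chainP c2 uC vC.
move=> x H.
have zG : z \in glue C1 C2 z by rewrite !inE z1 lexx.
rewrite !inE; case: (boolP (x <= z)%O) => xz /=; rewrite ?andbT ?andbF ?orbF.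
  apply: maxchain_in m1 _ => c cC; case: (boolP (c <= z)%O) => cz.
    by apply: H; rewrite !inE cC cz.
  by rewrite (le_trans xz (ge1 c cC cz)).
apply: maxchain_in m2 _ => c cC; case: (boolP (c <= z)%O) => cz.
  have zx : (z <= x)%O by have := H z zG; rewrite (negbTE xz).
  by rewrite (le_trans cz zx) orbT.
by apply: H; rewrite !inE cC cz orbT.
Qed.

Lemma glue_sum (f : T -> int) C1 C2 z :
  \sum_(x in glue C1 C2 z) f x =
  \sum_(x in C1 | (x <= z)%O) f x + \sum_(x in C2 | ~~ (x <= z)%O) f x.
Proof.
rewrite (bigID (fun x => (x <= z)%O)) /=; congr (_ + _); apply: eq_bigl => x;
  rewrite !inE; by case: (x <= z)%O; rewrite ?andbT ?andbF ?orbF.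
Qed.

Lemma ar_big (e a b c y k : int) : 0 < a -> e <= b -> 0 <= k -> c = a + b -> y = c + k -> e < y.
Proof. move=> *; lia. Qed.
Lemma ar2 (e y : int) : e < y -> e <= y - 1.
Proof. move=> *; lia. Qed.
Lemma ar3 (a b s d e : int) : a <= s + d - 2 - e -> s <= 1 -> b <= d - e -> a + b = (d - e) + (d - e) -> False.
Proof. move=> *; lia. Qed.
End H3.

Unset Implicit Arguments.
Local Open Scope ring_scope.

Theorem mainTheorem15 (disp : Order.disp_t) (T : finPOrderType disp)
    (eps : int) (xi : option T -> int) (d : int) :
  (eps = 1 \/ eps = -1) ->
  is_generator eps xi ->
  degree xi = d ->
  (* d > q^(eps)dist(-oo, oo) = max { eps * t : saturated chain of length t } *)
  (forall s : seq (ext T), sat_chain MInf PInf s -> eps * (size s)%:Z < d) ->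
  inS eps (xi_one eps xi) /\ is_generator eps (xi_one eps xi) /\
  degree (xi_one eps xi) = d - 1.
Proof.
move=> heps [xiS ngen] hdeg hdist.
have [xi0 xiC] := xiS.
set eta := xi_one eps xi.
pose zb x := [exists C, Cxi xi (degree xi - eps) C && is_max_big eps xi C x].
have xiN : xi None = d by [].
have etaN : eta None = d - 1 by rewrite /eta /= xiN.
have etaS x : xi (Some x) = eta (Some x) + (if zb x then 1 else 0).
  by rewrite /eta /zb /=; case: ifP => _; rewrite ?subrK ?addr0.
have xiplusE C : xiplus xi C = xiplus eta C + \sum_(c in C) (if zb c then 1 else 0).
  by rewrite /xiplus -big_split; apply: eq_bigr => c _; exact: etaS.
have zbge (C : {set T}) : 0 <= \sum_(c in C) (if zb c then 1 else 0 : int).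
  by apply: sumr_ge0 => c _; case: ifP.
have xiup C : maxchainb C -> xiplus xi C <= d - eps.
  by move=> mC; have := xiC C mC; rewrite xiN; lia.
have zbbig x : zb x -> eps < xi (Some x).
  by case/existsP => C /andP [_ /and3P [_ h _]].
have tightZ C : maxchainb C -> xiplus xi C = d - eps -> exists2 z, z \in C & zb z.
  move=> mC tC.
  case: (boolP [exists c in C, eps < xi (Some c)]) => [/exists_inP [c0 c0C c0b]| /exists_inPn nb].
    pose P c := (c \in C) && (eps < xi (Some c)).
    have Pc0 : P c0 by rewrite /P c0C c0b.
    case: (arg_maxnP rk Pc0) => z /andP [zC zbg] zmax.
    exists z => //; apply/existsP; exists C; rewrite /Cxi mC hdeg tC eqxx /=.
    rewrite /is_max_big zC zbg /=; apply/forall_inP => c cC; apply/implyP => cb.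
    have := chainP (maxchain_chain mC) cC zC; case/orP => // zc.
    case: (eqVneq c z) => [->|cz]; first by rewrite lexx.
    have zc' : (z < c)%O by rewrite lt_neqAle eq_sym cz.
    have := zmax c; rewrite /P cC cb => /(_ isT) /=; rewrite leqNgt (rk_lt zc') //.
  exfalso.
  have eqs : xiplus xi C = eps * #|C|%:Z.
    rewrite /xiplus (eq_bigr (fun _ => eps)); last first.
      move=> c cC; apply/eqP; rewrite eq_le xi0 andbT leNgt; exact: nb.
    by rewrite sumr_const -mulr_natr natz.
  have [s [ss sz]] := maxchain_sat mC.
  have := hdist s ss; rewrite sz.
  have hd : d = eps * #|C|%:Z + eps by rewrite -eqs tC subrK.
  by rewrite hd -addn1 PoszD mulrDr mulr1 ltxx.
have zbE x : zb x -> exists2 C2, maxchainb C2 /\ xiplus xi C2 = d - eps & is_max_big eps xi C2 x.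
  case/existsP => C2 /andP [/andP [mC2 /eqP tC2] h]; exists C2 => //.
  by rewrite -hdeg.
clearbody eta zb.
have etaIn : inS eps eta.
  split.
    move=> x; have := etaS x; have := xi0 x.
    by case: (boolP (zb x)) => [/zbbig h|_]; lia.
  move=> C mC; rewrite etaN; have := xiplusE C; have := xiup C mC; have := zbge C.
  case: (eqVneq (xiplus xi C) (d - eps)) => [tC|ntC].
    have [z zC zbz] := tightZ C mC tC.
    have : 1 <= \sum_(c in C) (if zb c then 1 else 0 : int).
      rewrite (bigD1 z) //= zbz; rewrite lerDl; apply: sumr_ge0 => c _; by case: ifP.
    set S := \sum_(c in C) _; set X := xiplus xi C; set Y := xiplus eta C; move=> h1 h2 h3 h4; lia.
  have lt : xiplus xi C < d - eps by rewrite lt_neqAle ntC xiup.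
  set S := \sum_(c in C) _; set X := xiplus xi C; set Y := xiplus eta C; lia.
split => //; split; last by rewrite /degree etaN.
split => //.
case=> al [be [alS alpos beS hsum]].
have [al0 alC] := alS; have [be0 beC] := beS.
have Abig x : x \in Aset al -> eps < xi (Some x).
  rewrite inE => /andP [ap _].
  apply: (ar_big ap (be0 x) _ (hsum (Some x)) (etaS x)); by case: ifP.
have G E : maxchainb E -> (forall x, x \in E -> x \notin Aset al) ->
    xiplus xi E <= \sum_(c in E) (if zb c then 1 else 0) + d - 2 - eps.
  move=> mE nA; have h2 := L2 alS alpos mE nA.
  have h3 := beC E mE; have h4 := hsum None; rewrite etaN in h4.
  have h5 : xiplus eta E = xiplus al E + xiplus be E.
    by rewrite /xiplus -big_split; apply: eq_bigr => c _; exact: hsum.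
  have := xiplusE E; lia.
apply: ngen; exists (ind al), (fun z => xi z - ind al z); split.
- split; first by move=> x /=; case: ifP.
  by move=> C mC; rewrite addr0 /=; exact: ind_chain (maxchain_chain mC).
- by [].
- split.
    move=> x /=; case: ifP => xA; last by rewrite subr0.
    exact: ar2 (Abig x xA).
  move=> C mC /=.
  have -> : xiplus (fun z => xi z - ind al z) C = xiplus xi C - xiplus (ind al) C.
    by rewrite /xiplus -sumrB.
  case: (boolP [exists a in C, a \in Aset al]) => [/exists_inP [a aC aA]|/exists_inPn nA].
    have : 1 <= xiplus (ind al) C.
      rewrite /xiplus (bigD1 a) //= aA lerDl; apply: sumr_ge0 => c _ /=; by case: ifP.
    have := xiC C mC; lia.
  have ltC : xiplus xi C < d - eps.
    rewrite lt_neqAle xiup // andbT; apply/eqP => tC.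
    have [z0 z0C z0b] := tightZ C mC tC.
    pose P c := (c \in C) && zb c.
    have Pz0 : P z0 by rewrite /P z0C z0b.
    case: (arg_minnP rk Pz0) => z /andP [zC zbz] zmin.
    have [C2 [mC2 tC2] /and3P [zC2 _ zmax]] := zbE z zbz.
    have mD := glue_max mC mC2 zC zC2.
    have mD' := glue_max mC2 mC zC2 zC.
    have hD := xiup _ mD; have hD' := xiup _ mD'.
    have sD : forall F, xiplus xi F = \sum_(x in F | (x <= z)%O) xi (Some x) +
                                  \sum_(x in F | ~~ (x <= z)%O) xi (Some x).
      by move=> F; rewrite /xiplus (bigID (fun x => (x <= z)%O)).
    have eD : xiplus xi (glue C C2 z) + xiplus xi (glue C2 C z) = xiplus xi C + xiplus xi C2.
      rewrite /xiplus !glue_sum -/(xiplus xi C) -/(xiplus xi C2) (sD C) (sD C2).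
      by rewrite addrACA [X in _ + X]addrC addrACA.
    have nAD : forall x, x \in glue C C2 z -> x \notin Aset al.
      move=> x /setUP [|]; rewrite inE => /andP; [move=> [xC _]; exact: nA|move=> [xC2 xz]].
      apply/negP => /Abig xb; move/forall_inP: zmax => /(_ x xC2).
      by rewrite xb /= (negbTE xz).
    have hG := G _ mD nAD.
    have : \sum_(c in glue C C2 z) (if zb c then 1 else 0 : int) <= 1.
      rewrite glue_sum [X in _ + X]big1 ?addr0; last first.
        move=> c /andP [cC2 cz]; case: ifP => // /zbbig cb; exfalso.
        by move/forall_inP: zmax => /(_ c cC2); rewrite cb /= (negbTE cz).
      apply: (@le_trans _ _ (\sum_(c in C | (c <= z)%O) (if c == z then 1 else 0 : int))).
        apply: ler_sum => c /andP [cC cz]; case: ifP => // zc; case: eqVneq => // ncz.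
        have czl : (c < z)%O by rewrite lt_neqAle ncz.
        have := zmin c; rewrite /P cC zc => /(_ isT) /=; rewrite leqNgt (rk_lt czl) //.
      rewrite (bigD1 z) ?zC ?lexx //= eqxx big1 ?addr0 // => c /andP [_ /negbTE ->] //.
    move=> hS; apply: (ar3 hG hS hD'); by rewrite eD tC tC2.
  have i0 : 0 <= xiplus (ind al) C by apply: sumr_ge0 => c _ /=; case: ifP.
  rewrite xiN; lia.
- by move=> z; rewrite addrC subrK.
Qed.
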